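(* For every $k \in \mathbb{N}$, there exists a digraph $G_k$ with $\kappa'(G_k) \ge k$ such that $G_k$ contains no subdivision of $\overleftrightarrow{K}_4$.
   Context: Digraphs are finite, loopless, have no parallel arcs, but may contain digons. $\kappa'(D)$ is the strong arc-connectivity: $D$ is strongly $k$-arc-connected if $D-E$ is strongly connected for every set $E$ of at most $k-1$ arcs, and $\kappa'(D)$ is the largest such $k$. $\overleftrightarrow{K}_4$ is the bioriented complete graph on four vertices (both arcs $(u,v),(v,u)$ for every pair of distinct vertices). A subdivision of a digraph $F$ is obtained by replacing each arc $(x,y)$ by a directed $x$-$y$-path, with paths for different arcs internally vertex-disjoint. *)

(* Defs.v *)
From mathcomp Require Import all_boot.
Set Implicit Arguments. Unset Strict Implicit. Unset Printing Implicit Defensive.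

(* A digraph on a finite vertex type V is given by its arc relation A : rel V.
   No parallel arcs is automatic (A is a relation); looplessness is a hypothesis
   [loopless A]; digons are allowed. *)
Definition loopless (V : finType) (A : rel V) : Prop := forall v, ~~ A v v.

Definition arcs (V : finType) (A : rel V) : {set V * V} :=
  [set e | A e.1 e.2].

Definition del_arcs (V : finType) (A : rel V) (E : {set V * V}) : rel V :=
  fun u v => A u v && ((u, v) \notin E).

Definition strongly_connected (V : finType) (A : rel V) : Prop :=
  forall x y : V, connect A x y.

(* D is strongly k-arc-connected: D - E is strongly connected for every set E
   of at most k-1 arcs (i.e. fewer than k arcs).  kappa'(D) >= k iff this holds. *)
Definition strongly_k_arc_connected (V : finType) (A : rel V) (k : nat) : Prop :=
  forall E : {set V * V}, E \subset arcs A -> #|E| < k ->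
    strongly_connected (del_arcs A E).

(* D contains a subdivision of the bioriented K4: four distinct branch vertices
   b 0..b 3 and, for each ordered pair (i,j) with i <> j, a directed
   b i - b j path in D whose list of internal vertices is P i j; internal
   vertices are distinct, avoid all branch vertices, and the internal vertex
   sets of different paths are disjoint. *)
Definition has_subdiv_biK4 (V : finType) (A : rel V) : Prop :=
  exists (b : 'I_4 -> V) (P : 'I_4 -> 'I_4 -> seq V),
    injective b /\
    (forall i j : 'I_4, i != j ->
       [/\ path A (b i) (rcons (P i j) (b j)),
           uniq (P i j) &
           forall v, v \in P i j -> forall l, v != b l]) /\
    (forall i j i' j' : 'I_4, i != j -> i' != j' -> (i, j) != (i', j') ->
       forall v, v \in P i j -> v \notin P i' j').

(* Main.v *)
Require Import Defs.
From mathcomp Require Import all_boot zify.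
Set Implicit Arguments. Unset Strict Implicit. Unset Printing Implicit Defensive.

Lemma split_first (T : eqType) (e : rel T) (Q : pred T) x p :
  path e x p -> ~~ Q x -> Q (last x p) ->
  exists p1 w p2, [/\ p = p1 ++ w :: p2, all (predC Q) (x :: p1), Q w
                    & e (last x p1) w].
Proof.
elim: p x => [|y p IH] x /=; first by move=> _ /negbTE ->.
case/andP=> exy pyp nQx Ql.
case Qy: (Q y).
  by exists [::], y, p; rewrite /= nQx.
have [p1 [w [p2 [-> Hall Qw ew]]]] := IH y pyp (negbT Qy) Ql.
exists (y :: p1), w, p2; split => //=.
by rewrite nQx; move: Hall => /= ->.
Qed.

Lemma rcons_split (T : eqType) (P : seq T) (x : T) p1 p2 :
  x \notin P -> rcons P x = p1 ++ x :: p2 -> P = p1 /\ p2 = [::].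
Proof.
case: (lastP p2) => [|q y].
  by rewrite cats1 => xP /rcons_inj [].
rewrite -rcons_cons -rcons_cat => xP /rcons_inj [E _].
by move: xP; rewrite E mem_cat inE eqxx orbT.
Qed.

Section Sub.
Variables (V : finType) (A : rel V) (b : 'I_4 -> V) (P : 'I_4 -> 'I_4 -> seq V).
Hypothesis binj : injective b.
Hypothesis HP : forall i j : 'I_4, i != j ->
       [/\ path A (b i) (rcons (P i j) (b j)),
           uniq (P i j) &
           forall v, v \in P i j -> forall l, v != b l].
Hypothesis HD : forall i j i' j' : 'I_4, i != j -> i' != j' -> (i, j) != (i', j') ->
       forall v, v \in P i j -> v \notin P i' j'.

Lemma L2 i j v l : i != j -> v \in P i j -> v != b l.
Proof. by move=> ij vP; case: (HP ij) => _ _ /(_ v vP l). Qed.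

Lemma L1 i j i' j' v : i != j -> i' != j' -> (i, j) != (i', j') ->
  v \in P i j -> v \in P i' j' -> False.
Proof. by move=> ij ij' d vP vP'; move: (HD ij ij' d vP); rewrite vP'. Qed.

Lemma L4 i1 j1 i2 j2 v : i1 != i2 -> i1 != j1 -> i2 != j2 ->
  v \in b i1 :: P i1 j1 -> v \in b i2 :: P i2 j2 -> False.
Proof.
move=> i12 ij1 ij2; rewrite !inE => /orP[/eqP->|H1] /orP[/eqP|H2].
- by move/binj => e; move: i12; rewrite e eqxx.
- by move: (@L2 i2 j2 (b i1) i1 ij2 H2); rewrite eqxx.
- by move=> e; move: (@L2 i1 j1 v i2 ij1 H1); rewrite e eqxx.
- apply: (L1 ij1 ij2 _ H1 H2).
  by apply: contra i12 => /eqP [->].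
Qed.

Lemma L5 m j1 j2 : m != j1 -> m != j2 -> j1 != j2 ->
  head (b j1) (P m j1) = head (b j2) (P m j2) -> False.
Proof.
move=> mj1 mj2 j12.
have d : (m, j1) != (m, j2) by apply: contra j12 => /eqP [->].
case E1: (P m j1) => [|a1 s1]; case E2: (P m j2) => [|a2 s2] /=.
- by move/binj => e; move: j12; rewrite e eqxx.
- move=> e; have H : a2 \in P m j2 by rewrite E2 inE eqxx.
  by move: (@L2 m j2 a2 j1 mj2 H); rewrite -e eqxx.
- move=> e; have H : a1 \in P m j1 by rewrite E1 inE eqxx.
  by move: (@L2 m j1 a1 j2 mj1 H); rewrite e eqxx.
- move=> e; apply: (L1 mj1 mj2 d (v := a1)); first by rewrite E1 inE eqxx.
  by rewrite E2 e inE eqxx.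
Qed.

Lemma full_path i j : i != j -> path A (b i) (rcons (P i j) (b j)).
Proof. by case/HP. Qed.

End Sub.

Section Tree.
Variable n : nat.
Hypothesis n_gt0 : 0 < n.
Definition Node := n.-bseq 'I_n.
Definition Tarc (s t : Node) : bool :=
  ((size t == (size s).+1) && (behead t == s :> seq 'I_n))
  || [&& size s == n, t != s & suffix t s].

Lemma Tarc_irr s : ~~ Tarc s s.
Proof. by rewrite /Tarc eqxx /= andbF orbF; case: eqP => //= /eqP; rewrite -addn1 -{1}(addn0 (size s)) eqn_add2l. Qed.

Lemma suffix_consE (T : eqType) (s t : seq T) x :
  suffix s (x :: t) = (s == x :: t) || suffix s t.
Proof.
apply/idP/orP.
  case/suffixP => [[|y s2]] /= E; first by left; rewrite E.
  by right; case: E => _ ->; apply: suffix_suffix.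
case=> [/eqP->|H]; first exact: suffix_refl.
exact: suffix_trans H (suffix_cons _ _).
Qed.

Lemma T1 u w (bb : Node) : Tarc u w -> suffix bb w -> ~~ suffix bb u ->
  w = bb /\ (u : seq _) = behead bb.
Proof.
case/orP.
  case/andP => sz /eqP bh.
  case E: (bseqval w) bh sz => [|x w'] //= bh _.
  rewrite -bh. 
  rewrite suffix_consE.
  case/orP => [/eqP e _|-> //]; split; first by apply: val_inj; rewrite /= E e.
  by rewrite e.
case/and3P => _ _ wu bw; by rewrite (suffix_trans bw wu).
Qed.

Lemma T2 (bb w : Node) : suffix bb w -> bb != w -> size bb < size w.
Proof.
case/suffixP => s E ne.
case: s E => [|x s] E; first by move: ne; rewrite (_ : bb = w) ?eqxx //; apply: val_inj.
by rewrite E size_cat /=; lia.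
Qed.


Definition mkN (s : seq 'I_n) : Node := insub_bseq n s.
Lemma mkNK s : size s <= n -> mkN s = s :> seq _.
Proof. by move=> H; rewrite /mkN /insub_bseq insubdK. Qed.

Definition rootN : Node := mkN [::].
Lemma rootNE : rootN = [::] :> seq _.
Proof. by rewrite mkNK. Qed.

Lemma T3 v : n <= #|[set w | Tarc v w]|.
Proof.
have [lt|ge] := ltnP (size v) n.
  pose f (i : 'I_n) := mkN (i :: v).
  have fE i : f i = i :: v :> seq _ by rewrite mkNK.
  have finj : injective f by move=> i j /(congr1 val); rewrite /= !fE => -[].
  apply: (@leq_trans #|f @: [set: 'I_n]|); first by rewrite card_imset // cardsT card_ord.
  apply: subset_leq_card; apply/subsetP => w /imsetP[i _ ->].
  by rewrite inE /Tarc fE /= !eqxx.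
have sv : size v = n by apply/eqP; rewrite eqn_leq size_bseq ge.
pose f (i : 'I_n) := mkN (drop i.+1 v).
have fE i : f i = drop i.+1 v :> seq _ by rewrite mkNK // size_drop; lia.
have fsz i : size (f i) = n - i.+1 by rewrite fE size_drop sv.
have finj : injective f.
  move=> i j /(congr1 (fun x : Node => size x)); rewrite !fsz => e.
  apply: val_inj => /=; move: (ltn_ord i) (ltn_ord j) e; lia.
apply: (@leq_trans #|f @: [set: 'I_n]|); first by rewrite card_imset // cardsT card_ord.
apply: subset_leq_card; apply/subsetP => w /imsetP[i _ ->].
rewrite inE /Tarc sv eqxx /=; apply/orP; right.
rewrite fE suffix_drop andbT.
apply/eqP => /(congr1 (fun x : Node => size x)); rewrite fsz sv; move: (ltn_ord i); lia.
Qed.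

Lemma root_conn t : connect Tarc rootN t.
Proof.
suff H : forall l, size l <= n -> connect Tarc rootN (mkN l).
  by have := H t (size_bseq t); rewrite (_ : mkN t = t) //; apply: val_inj => /=; rewrite mkNK // size_bseq.
elim=> [|x l IH] /= szl; first by rewrite connect0.
apply: connect_trans (IH (ltnW szl)) (connect1 _).
by rewrite /Tarc !mkNK //= ?eqxx // ltnW.
Qed.

Lemma to_root s : connect Tarc s rootN.
Proof.
move: {2}(n - size s) (erefl (n - size s)) => d.
elim: d s => [|d IH] s E.
  apply: connect1; rewrite /Tarc rootNE /= suffix0s andbT.
  have sz : size s = n by move: (size_bseq s); lia.
  rewrite sz eqxx /=; apply/eqP => /(congr1 (fun x : Node => size x)).
  by rewrite rootNE sz /=; lia.
have lt : size s < n by lia.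
pose c := mkN (Ordinal n_gt0 :: s).
have cE : c = Ordinal n_gt0 :: s :> seq _ by rewrite mkNK.
apply: connect_trans (connect1 (_ : Tarc s c)) (IH c _).
  by rewrite /Tarc cE /= !eqxx.
by rewrite cE /= subnS E.
Qed.

Lemma T4 s t : connect Tarc s t.
Proof. exact: connect_trans (to_root s) (root_conn t). Qed.

End Tree.

Section DG.
Variable n : nat.
Hypothesis n_gt0 : 0 < n.
Local Notation Node := (Node n).
Local Notation Tarc := (@Tarc n).

Definition DV := (Node * option Node)%type.
Local Notation V := DV.
Definition Darc (x y : V) : bool :=
  match x.2, y.2 with
  | None, Some _ => x.1 == y.1
  | Some _, None => Tarc x.1 y.1
  | Some c, Some c' => (x.1 == y.1) && Tarc c' c
  | None, None => false
  end.

Lemma Darc_irr x : ~~ Darc x x.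
Proof. by case: x => v [c|] //; rewrite /Darc /= eqxx /= Tarc_irr. Qed.

Lemma card_Node : n <= #|[set: Node]|.
Proof.
exact: leq_trans (T3 n_gt0 (rootN n)) (subset_leq_card (subsetT _)).
Qed.

Definition leaving (X : {set V}) :=
  [set e : V * V | [&& Darc e.1 e.2, e.1 \in X & e.2 \notin X]].

Lemma cut (X : {set V}) x y : x \in X -> y \notin X -> n <= #|leaving X|.
Proof.
move=> xX yX.
case A: [exists v, exists c, ((v, Some c) \in X) &&
                 [forall w, Tarc v w ==> ((w, None) \notin X)]].
  case/existsP: A => v /existsP[c /andP[vcX /forallP Hw]].
  pose f (w : Node) : V * V := ((v, Some c), (w, None)).
  have finj : injective f by move=> w1 w2 [].
  apply: leq_trans (T3 n_gt0 v) _.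
  rewrite -(card_imset _ finj); apply: subset_leq_card.
  apply/subsetP => e /imsetP[w]; rewrite inE => tw ->.
  by rewrite inE /Darc /= tw vcX (implyP (Hw w) tw).
case B: [exists v, exists c0, ((v, None) \in X) && ((v, Some c0) \notin X)].
  case/existsP: B => v /existsP[c0 /andP[vX vc0X]].
  pose g (c : Node) : V * V :=
    if (v, Some c) \in X then ((v, Some c), (v, Some c0)) else ((v, None), (v, Some c)).
  have ginj : injective g.
    move=> c1 c2; rewrite /g.
    by case: ((v, Some c1) \in X); case: ((v, Some c2) \in X) => // -[].
  apply: leq_trans (T3 n_gt0 c0) _.
  rewrite -(card_imset _ ginj); apply: subset_leq_card.
  apply/subsetP => e /imsetP[c]; rewrite inE => tc ->.
  rewrite inE /g; case: ifP => cX; rewrite /Darc /=; first by rewrite eqxx tc cX vc0X.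
  by rewrite eqxx vX cX.
have nA : forall v c, (v, Some c) \in X -> exists w, Tarc v w && ((w, None) \in X).
  move=> v c H; apply/existsP; apply: contraFT A => Hn.
  apply/existsP; exists v; apply/existsP; exists c; rewrite H /=.
  apply/forallP => w; apply/implyP => tw; apply: contra Hn => Hin.
  by apply/existsP; exists w; rewrite tw.
have nB : forall v c, (v, None) \in X -> (v, Some c) \in X.
  move=> v c H; apply: contraFT B => Hn.
  by apply/existsP; exists v; apply/existsP; exists c; rewrite H.
have [u0 u0X] : exists u0, (u0, None) \in X.
  case: x xX => v [c|] H; last by exists v.
  by case: (nA v c H) => w /andP[_ ?]; exists w.
have [w0 w0X] : exists w0, (w0, None) \notin X.
  case: y yX => v [c|] H; last by exists v.
  by exists v; apply: contra H; apply: nB.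
case/connectP: (T4 n_gt0 u0 w0) => p pth lst.
have [p1 [w [p2 [_ Hall Qw ew]]]] :
  exists p1 w p2, [/\ p = p1 ++ w :: p2, all (predC (fun z => (z, None) \notin X)) (u0 :: p1),
     (w, None) \notin X & Tarc (last u0 p1) w].
  by apply: split_first => //; [rewrite negbK | rewrite -lst].
have uX : (last u0 p1, None) \in X.
  by have := (allP Hall) _ (mem_last u0 p1); rewrite /= negbK.
pose h (c : Node) : V * V := ((last u0 p1, Some c), (w, None)).
have hinj : injective h by move=> c1 c2 [].
apply: leq_trans card_Node _.
rewrite -(card_imset _ hinj); apply: subset_leq_card.
apply/subsetP => e /imsetP[c _ ->].
by rewrite inE /Darc /= ew Qw nB.
Qed.

Lemma Dconn k : k <= n -> strongly_k_arc_connected Darc k.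
Proof.
move=> kn E _ Ek x y.
apply/negPn/negP => Hn.
pose X := [set z | connect (del_arcs Darc E) x z].
have xX : x \in X by rewrite inE connect0.
have yX : y \notin X by rewrite inE.
have sub : leaving X \subset E.
  apply/subsetP => e; rewrite inE => /and3P[de e1X e2X].
  apply: contraNT e2X => eE; rewrite inE in e1X; rewrite /X inE.
  apply: connect_trans e1X (connect1 _).
  by rewrite /del_arcs de /= -surjective_pairing.
have H := leq_trans (cut xX yX) (subset_leq_card sub).
by move: (leq_ltn_trans H Ek); rewrite ltnNge kn.
Qed.

End DG.

Lemma three_others (m : 'I_4) : exists j1 j2 j3 : 'I_4,
  [/\ j1 != m, j2 != m & j3 != m] /\ [/\ j1 != j2, j1 != j3 & j2 != j3].
Proof.
case: m => [[|[|[|[|m]]]] Hm] //.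
- by exists (@Ordinal 4 1 isT), (@Ordinal 4 2 isT), (@Ordinal 4 3 isT).
- by exists (@Ordinal 4 0 isT), (@Ordinal 4 2 isT), (@Ordinal 4 3 isT).
- by exists (@Ordinal 4 0 isT), (@Ordinal 4 1 isT), (@Ordinal 4 3 isT).
- by exists (@Ordinal 4 0 isT), (@Ordinal 4 1 isT), (@Ordinal 4 2 isT).
Qed.

Lemma mem_prefix (T : eqType) (z x y w : T) p1 p2 P :
  z \in x :: p1 -> rcons P y = p1 ++ w :: p2 -> z = x \/ z \in P \/ z = y.
Proof.
rewrite inE => /orP[/eqP->|zp E]; first by left.
have : z \in rcons P y by rewrite E mem_cat zp.
by rewrite mem_rcons inE => /orP[/eqP->|->]; right; [right|left].
Qed.

Section DK.
Variable n : nat.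
Hypothesis n_gt0 : 0 < n.
Local Notation V := (DV n).
Local Notation Darc := (@Darc n).
Variables (b : 'I_4 -> V) (P : 'I_4 -> 'I_4 -> seq V).
Hypothesis binj : injective b.
Hypothesis HP : forall i j : 'I_4, i != j ->
       [/\ path Darc (b i) (rcons (P i j) (b j)),
           uniq (P i j) &
           forall v, v \in P i j -> forall l, v != b l].
Hypothesis HD : forall i j i' j' : 'I_4, i != j -> i' != j' -> (i, j) != (i', j') ->
       forall v, v \in P i j -> v \notin P i' j'.

Lemma pth i j : i != j -> path Darc (b i) (rcons (P i j) (b j)).
Proof. by case/HP. Qed.

Lemma bnotin i j l : i != j -> b l \notin P i j.
Proof. by move=> ij; apply/negP => H; move: (L2 HP l ij H); rewrite eqxx. Qed.

Definition Cv (a : Node n) (z : V) := (z.1 == a) && (z.2 != None).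

Lemma entry_copy (a : Node n) x p : path Darc x p -> ~~ Cv a x -> Cv a (last x p) ->
  exists p1 w p2, p = p1 ++ w :: p2 /\ (a, None) \in x :: p1.
Proof.
move=> pt nx lx.
have [p1 [w [p2 [E Hall Cw Dw]]]] := split_first (Q := Cv a) pt nx lx.
exists p1, w, p2; split => //.
have nu : ~~ Cv a (last x p1) by have := (allP Hall) _ (mem_last x p1).
have := mem_last x p1.
move: Dw nu Cw; case: (last x p1) => [a1 [c1|]]; case: w {E} => [a2 [c2|]] //;
  rewrite /Darc /Cv /= ?andbT ?andbF //.
  by move=> /andP[/eqP-> _] nu /eqP e; move: nu; rewrite e eqxx.
by move=> /eqP-> _ /eqP->.
Qed.


Lemma step2 : (forall i, (b i).2 = None) -> False.
Proof.
move=> allF.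
have [m _ Hmax] := @arg_maxnP _ ord0 xpredT (fun i => size (b i).1) isT.
set vm := (b m).1.
have bmE : b m = (vm, None) by rewrite [b m]surjective_pairing allF.
have nsuf : forall j, j != m -> ~~ suffix vm (b j).1.
  move=> j jm; apply/negP => s.
  have [e|ne] := eqVneq vm (b j).1.
    have : b j = b m by rewrite bmE [b j]surjective_pairing allF e.
    by move/binj => e'; move: jm; rewrite e' eqxx.
  by move: (Hmax j isT) => /=; rewrite leqNgt (T2 n_gt0 s ne).
have key : forall j, j != m ->
    exists pn : Node n, (pn : seq _) = behead vm /\ (pn, None) \in b j :: P j m.
  move=> j jm.
  have pt := pth jm.
  have Lm : suffix vm (last (b j) (rcons (P j m) (b m))).1
    by rewrite last_rcons suffix_refl.
  have [p1 [w [p2 [E Hall Sw Dw]]]] :=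
    split_first (Q := fun z : V => suffix vm z.1) pt (nsuf j jm) Lm.
  have nSu : ~~ suffix vm (last (b j) p1).1 by have := (allP Hall) _ (mem_last _ p1).
  have pt1 : path Darc (b j) p1 by move: pt; rewrite E cat_path => /andP[].
  move: Dw nSu Sw E pt1.
  case Eu: (last (b j) p1) => [a [c|]]; case: w => [a' [c'|]] //; rewrite /Darc /=.
  - by move=> /andP[/eqP-> _] /negbTE->.
  - move=> Dw nSu Sw E pt1.
    have [a'E aE] := T1 Dw Sw nSu.
    have [Pp1 _] : P j m = p1 /\ p2 = [::].
      have H := rcons_split (@bnotin j m m jm); apply: H.
      by rewrite E bmE a'E.
    have C1 : ~~ Cv a (b j) by rewrite /Cv allF andbF.
    have C2 : Cv a (last (b j) p1) by rewrite Eu /Cv /= eqxx.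
    have [q1 [w' [q2 [E2 Hin]]]] := entry_copy pt1 C1 C2.
    exists a; split => //.
    by rewrite Pp1 E2 -cat_cons mem_cat Hin.
  - by move=> /eqP-> /negbTE->.
have [j1 [j2 [j3 [[j1m j2m _] [j12 _ _]]]]] := three_others m.
have [pn1 [e1 H1]] := key j1 j1m.
have [pn2 [e2 H2]] := key j2 j2m.
have epn : pn1 = pn2 by apply: val_inj; rewrite /= e1 e2.
by apply: (L4 binj HP HD j12 j1m j2m H1); rewrite epn.
Qed.


Lemma head_rcons (T : Type) (s : seq T) (y w : T) p2 :
  rcons s y = w :: p2 -> head y s = w.
Proof. by case: s => [|a s] /= [->]. Qed.

Lemma step1 j0 c0 : (b j0).2 = Some c0 -> False.
Proof.
move=> Hj0.
set v := (b j0).1.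
pose inC i := Cv v (b i).
pose cs i := if (b i).2 is Some c then size c else 0.
have inC0 : inC j0 by rewrite /inC /Cv Hj0 eqxx.
have [m Cm Hmax] := @arg_maxnP _ j0 inC cs inC0.
have [cm bmE] : exists cm, b m = (v, Some cm).
  move: Cm; rewrite /inC /Cv [b m]surjective_pairing /=.
  by case: (b m).2 => [cm|] /andP[/eqP-> //]; exists cm.
have csm : cs m = size cm by rewrite /cs bmE.
pose R (z : V) := (z.1 == v) && (if z.2 is Some c then suffix cm c else false).
pose fv : V := (v, None).
have nR : forall j, j != m -> ~~ R (b j).
  move=> j jm; apply/negP; rewrite /R; case Eb: (b j) => [a [c|]] /= /andP[/eqP av s]; last by [].
  have ij : inC j by rewrite /inC /Cv Eb /= av eqxx.
  have := Hmax j ij; rewrite csm /cs Eb /=.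
  have [e|ne] := eqVneq cm c.
    have : b j = b m by rewrite Eb bmE av e.
    by move/binj => e'; move: jm; rewrite e' eqxx.
  by rewrite leqNgt (T2 n_gt0 s ne).
pose catO j := fv \in b j :: P j m.
pose catB j := fv \in P m j.
pose catG j := exists pc : Node n, (pc : seq _) = behead cm /\ head (b j) (P m j) = (v, Some pc).
have fvbm : fv != b m by rewrite bmE /fv; apply/eqP => -[].
have catP : forall jj, jj != m -> [\/ catO jj, catG jj | catB jj].
  move=> jj jm.
  case Ij: (inC jj); last first.
    apply: Or31.
    have pt := pth jm.
    have C1 : ~~ Cv v (b jj) by rewrite -/(inC jj) Ij.
    have C2 : Cv v (last (b jj) (rcons (P jj m) (b m))) by rewrite last_rcons bmE /Cv /= eqxx.
    have [p1 [w [p2 [E Hin]]]] := entry_copy pt C1 C2.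
    case: (mem_prefix Hin E) => [e|[H|e]]; rewrite /catO /fv.
    - by rewrite e inE eqxx.
    - by rewrite inE H orbT.
    - by move: fvbm; rewrite /fv e eqxx.
  have mj : m != jj by rewrite eq_sym.
  have pt := pth mj.
  have Rm : ~~ predC R (b m) by rewrite /= negbK bmE /R /= eqxx suffix_refl.
  have Rj : predC R (last (b m) (rcons (P m jj) (b jj))) by rewrite last_rcons /= nR.
  have [p1 [w [p2 [E Hall Qw Dw]]]] := split_first pt Rm Rj.
  have Ru : R (last (b m) p1) by have := (allP Hall) _ (mem_last _ p1); rewrite /= negbK.
  move: Ru Qw Dw.
  case Eu: (last (b m) p1) => [a [c|]]; rewrite /R /= => /andP[/eqP av sc]; last by [].
  case Ew: w => [a' [c'|]]; rewrite /Darc /=.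
  - move=> nR' /andP[/eqP aa' Tc].
    have nsc' : ~~ suffix cm c' by move: nR'; rewrite -aa' av eqxx.
    have [cE c'E] := T1 Tc sc nsc'.
    apply: Or32; exists c'; split => //.
    case: p1 {Hall} Eu E => [|a1 p1] /=.
      by move=> _ E; rewrite (head_rcons E) Ew -aa' av.
    move=> Eu E.
    have : last a1 p1 \in rcons (P m jj) (b jj) by rewrite E -cat_cons mem_cat mem_last.
    rewrite Eu av cE -bmE mem_rcons inE => /orP[/eqP/binj e|H].
      by move: jm; rewrite e eqxx.
    by move: (@bnotin m jj m mj); rewrite H.
  - move=> _ _; apply: Or33.
    have pt2 : path Darc w p2.
      by move: pt; rewrite E cat_path => /andP[_] /= /andP[].
    have lw : last w p2 = b jj.
      by move: (last_rcons (b m) (P m jj) (b jj)); rewrite E last_cat.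
    have C1 : ~~ Cv v w by rewrite Ew /Cv /= andbF.
    have C2 : Cv v (last w p2) by rewrite lw.
    have [q1 [w' [q2 [E2 Hin]]]] := entry_copy pt2 C1 C2.
    have : fv \in rcons (P m jj) (b jj).
      by rewrite E mem_cat; apply/orP; right; rewrite E2 -cat_cons mem_cat Hin.
    rewrite mem_rcons inE => /orP[/eqP e|//].
    by move: Ij; rewrite /inC -e /Cv /= andbF.
have [j1 [j2 [j3 [[j1m j2m j3m] [d12 d13 d23]]]]] := three_others m.
have OO ja jb : ja != jb -> ja != m -> jb != m -> catO ja -> catO jb -> False.
  by move=> dab am bm Ha Hb; apply: (L4 binj HP HD dab am bm Ha Hb).
have BB ja jb : ja != jb -> ja != m -> jb != m -> catB ja -> catB jb -> False.
  move=> dab am bm Ha Hb.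
  have d : (m, ja) != (m, jb) by apply: contra dab => /eqP [->].
  have ma : m != ja by rewrite eq_sym. 
  have mb : m != jb by rewrite eq_sym.
  exact: (L1 HD ma mb d Ha Hb).
have GG ja jb : ja != jb -> ja != m -> jb != m -> catG ja -> catG jb -> False.
  move=> dab am bm [pa [ea ha]] [pb [eb hb]].
  have epc : pa = pb by apply: val_inj; rewrite /= ea eb.
  have e : head (b ja) (P m ja) = head (b jb) (P m jb) by rewrite ha hb epc.
  have ma : m != ja by rewrite eq_sym. 
  have mb : m != jb by rewrite eq_sym.
  exact: (L5 binj HP HD ma mb dab e).
have OB ja jb : ja != m -> jb != m -> catO ja -> catB jb -> False.
  move=> am bm Ha Hb.
  have mb : m != jb by rewrite eq_sym.
  have Hb' : fv \in b m :: P m jb by rewrite inE; apply/orP; right.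
  exact: (L4 binj HP HD am am mb Ha Hb').
case: (catP j1 j1m) => [O1|G1|B1]; case: (catP j2 j2m) => [O2|G2|B2];
  case: (catP j3 j3m) => [O3|G3|B3];
  first [ exact: (OO _ _ d12 j1m j2m O1 O2) | exact: (OO _ _ d13 j1m j3m O1 O3)
        | exact: (OO _ _ d23 j2m j3m O2 O3)
        | exact: (BB _ _ d12 j1m j2m B1 B2) | exact: (BB _ _ d13 j1m j3m B1 B3)
        | exact: (BB _ _ d23 j2m j3m B2 B3)
        | exact: (GG _ _ d12 j1m j2m G1 G2) | exact: (GG _ _ d13 j1m j3m G1 G3)
        | exact: (GG _ _ d23 j2m j3m G2 G3)
        | exact: (OB _ _ j1m j2m O1 B2) | exact: (OB _ _ j1m j3m O1 B3)
        | exact: (OB _ _ j2m j1m O2 B1) | exact: (OB _ _ j2m j3m O2 B3)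
        | exact: (OB _ _ j3m j1m O3 B1) | exact: (OB _ _ j3m j2m O3 B2) ].
Qed.

Lemma noK4 : False.
Proof.
case: (pickP (fun i => (b i).2 != None)) => [i|H].
  by case E: (b i).2 => [c|] //= _; apply: (step1 E).
by apply: step2 => i; move: (H i) => /negbFE/eqP.
Qed.

End DK.

Theorem proposition1p10 :
  forall k : nat,
    exists (V : finType) (A : rel V),
      [/\ 1 < #|V|, loopless A, strongly_k_arc_connected A k
        & ~ has_subdiv_biK4 A].
Proof.
move=> k.
have n_gt0 : 0 < k.+1 by [].
exists (DV k.+1), (@Darc k.+1); split.
- apply/card_gt1P.
  exists (rootN k.+1, None), (rootN k.+1, Some (rootN k.+1)).
  by split => //; apply/eqP => -[].
- by move=> x; apply: Darc_irr.
- by apply: Dconn.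
- by move=> [b [P [binj [HP HD]]]]; apply: (noK4 n_gt0 binj HP HD).
Qed.
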